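(* Let $N\ge2$, let $\Omega$ be an $N\times N$ nonnegative matrix with zero diagonal and positive row sums $k_i=\sum_j\Omega_{ij}$ whose associated directed graph (edge $i\to j$ iff $\Omega_{ij}>0$) is strongly connected, and let $\mathcal L_{ij}=\delta_{ij}-\Omega_{ij}/k_i$. Let $\nu$ be a nonzero Borel measure on $(0,\infty)$ with $\int_0^\infty\min\{1,\tau\}\,\nu(d\tau)<\infty$. Then the matrix integral $$g(\mathcal L)=\int_0^\infty\big(\mathbf 1-e^{-\tau\mathcal L}\big)\,\nu(d\tau)$$ converges entrywise and satisfies: (i) $\sum_{j=1}^N g(\mathcal L)_{ij}=0$ for every $i$; (ii) $g(\mathcal L)_{ii}>0$ for every $i$; (iii) $g(\mathcal L)_{ij}<0$ for all $i\neq j$. Consequently the matrix $W^{(g)}_{ij}=\delta_{ij}-g(\mathcal L)_{ij}/g(\mathcal L)_{ii}$ is row-stochastic with $W^{(g)}_{ii}=0$ and $W^{(g)}_{ij}>0$ for all $i\ne j$.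
   Context: $\mathbf 1$ denotes the identity matrix, $\delta_{ij}$ the Kronecker delta. The scalar function $g(\mu)=\int_0^\infty(1-e^{-\tau\mu})\nu(d\tau)$ is a Bernstein function with $g(0)=0$. *)

(* Defs.v *)
From HB Require Import structures.
From mathcomp Require Import all_boot all_order all_algebra.
From mathcomp Require Import all_classical all_reals all_analysis.
Set Implicit Arguments. Unset Strict Implicit. Unset Printing Implicit Defensive.
Import Order.TTheory GRing.Theory Num.Theory.
Import numFieldNormedType.Exports.
Local Open Scope classical_set_scope.
Local Open Scope ring_scope.

Definition expmx (R : realType) (N : nat) (A : 'M[R]_N) : 'M[R]_N :=
  limn (series (fun k : nat => (k`!%:R)^-1 *: A ^+ k)).

Definition rowsum (R : realType) (N : nat) (Om : 'M[R]_N) (i : 'I_N) : R :=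
  \sum_(j < N) Om i j.

Definition rw_laplacian (R : realType) (N : nat) (Om : 'M[R]_N) : 'M[R]_N :=
  \matrix_(i, j) ((i == j)%:R - Om i j / rowsum Om i).

Definition strongly_connected (R : realType) (N : nat) (Om : 'M[R]_N) : Prop :=
  forall i j : 'I_N, connect (fun a b : 'I_N => 0 < Om a b) i j.

Definition g_integrand (R : realType) (N : nat) (L : 'M[R]_N) (tau : R) : 'M[R]_N :=
  1%:M - expmx (- tau *: L).

Definition posR (R : realType) : set R := `]0%R, +oo[%classic.
Arguments posR R : clear implicits.

Definition g_mx (R : realType) (nu : {measure set R -> \bar R}) (N : nat)
    (L : 'M[R]_N) : 'M[R]_N :=
  \matrix_(i, j) Rintegral nu (posR R) (fun tau => g_integrand L tau i j).

Definition W_mx (R : realType) (N : nat) (G : 'M[R]_N) : 'M[R]_N :=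
  \matrix_(i, j) ((i == j)%:R - G i j / G i i).

(* Main.v *)
Require Import Defs.
From HB Require Import structures.
From mathcomp Require Import all_boot all_order all_algebra.
From mathcomp Require Import all_classical all_reals all_analysis.
From mathcomp Require Import ring lra measurable_realfun.
Set Implicit Arguments. Unset Strict Implicit. Unset Printing Implicit Defensive.
Import Order.TTheory GRing.Theory Num.Theory.
Import numFieldNormedType.Exports.
Local Open Scope classical_set_scope.
Local Open Scope ring_scope.


Section Cauchy.
Context {R : realType}.

Lemma tri_sum (f : nat -> nat -> R) n :
  \sum_(0 <= k < n) \sum_(0 <= m < k.+1) f (k - m)%N m =
  \sum_(0 <= j < n) \sum_(0 <= m < n - j) f j m.
Proof.
elim: n => [|n IH]; first by rewrite !big_geq.
rewrite big_nat_recr //= IH.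
rewrite [RHS](eq_big_nat _ _ (F2 := fun j => \sum_(0 <= m < n - j) f j m + f j (n - j)%N)); last first.
  move=> j /andP[_ jn]; rewrite subSn // big_nat_recr //.
rewrite big_split /= [X in _ = X + _]big_nat_recr //= subnn [X in _ + X + _]big_geq // addr0.
congr (_ + _).
rewrite big_nat_rev /= add0n; apply: eq_big_nat => j /andP[_ jn].
by rewrite subSS subKn.
Qed.

Lemma cauchy_split (a b : nat -> R) n :
  (\sum_(0 <= j < n) a j) * (\sum_(0 <= m < n) b m) =
  \sum_(0 <= k < n) \sum_(0 <= m < k.+1) a (k - m)%N * b m +
  \sum_(0 <= j < n) \sum_(n - j <= m < n) a j * b m.
Proof.
have := tri_sum (fun j m => a j * b m) n; rewrite /= => ->.
rewrite -big_split /= big_distrl /=; apply: eq_big_nat => j /andP[_ jn].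
rewrite big_distrr /= -big_cat_nat //; exact: leq_subr.
Qed.
End Cauchy.


Section Cauchy2.
Context {R : realType}.

Definition Dsum (a b : nat -> R) n :=
  \sum_(0 <= j < n) \sum_(n - j <= m < n) a j * b m.

Lemma exp_binom (al : R) k :
  \sum_(0 <= m < k.+1) exp_coeff al (k - m)%N * exp_coeff al m = exp_coeff (al + al) k.
Proof.
rewrite /exp_coeff /= exprDn big_mkord big_distrl /=; apply: eq_bigr => i _.
have ik : (i <= k)%N by rewrite -ltnS.
have := bin_fact ik => /(congr1 (fun x : nat => x%:R : R)); rewrite !natrM => hf.
have h1 : (k - i)`!%:R != 0 :> R by rewrite pnatr_eq0 -lt0n fact_gt0.
have h2 : i`!%:R != 0 :> R by rewrite pnatr_eq0 -lt0n fact_gt0.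
rewrite -hf -mulr_natr; field.
by rewrite h1 h2 /= pnatr_eq0 -lt0n bin_gt0.
Qed.

Lemma cauchy_prod_cvg (a b : nat -> R) (al A B : R) :
  0 <= al -> (forall j, `|a j| <= exp_coeff al j) -> (forall m, `|b m| <= exp_coeff al m) ->
  series a @ \oo --> A -> series b @ \oo --> B ->
  (fun n => \sum_(0 <= k < n) \sum_(0 <= m < k.+1) a (k - m)%N * b m) @ \oo --> A * B.
Proof.
move=> al0 ha hb ca cb.
set e := exp_coeff al.
have eq1 : forall c d : nat -> R, (fun n => \sum_(0 <= k < n) \sum_(0 <= m < k.+1) c (k - m)%N * d m)
   = (fun n => series c n * series d n - Dsum c d n).
  by move=> c d; apply: funext => n; rewrite /series /= cauchy_split addrK.
rewrite eq1 -[X in _ --> X]subr0; apply: cvgB; first exact: cvgM.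
have ce : series e @ \oo --> expR al by exact: (is_cvg_series_exp_coeff al).
have De : Dsum e e @ \oo --> 0.
  have : (fun n => series e n * series e n - Dsum e e n) @ \oo --> expR (al + al).
    rewrite -eq1; under eq_fun do under eq_bigr do rewrite exp_binom.
    exact: (is_cvg_series_exp_coeff (al + al)).
  move=> h.
  have -> : Dsum e e = (fun n => series e n * series e n) - (fun n => series e n * series e n - Dsum e e n).
    by apply: funext => n /=; rewrite opprB addrC subrK.
  rewrite -(subrr (expR (al + al))); apply: cvgB => //.
  by rewrite expRD; exact: cvgM.
apply: norm_cvg0; apply: (@squeeze_cvgr _ _ _ _ (fun=> 0) (Dsum e e)) => //; last exact: cvg_cst.
near=> n; rewrite normr_ge0 /=.
rewrite /Dsum; apply: (le_trans (ler_norm_sum _ _ _)); apply: ler_sum => j _.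
apply: (le_trans (ler_norm_sum _ _ _)); apply: ler_sum => m _.
rewrite normrM; apply: ler_pM => //.
Unshelve. all: by end_near. Qed.
End Cauchy2.


Section Mx.
Context {R : realType}.

Lemma mx_cvg_entry n m (u : nat -> 'M[R]_(n, m)) (l : 'M[R]_(n, m)) :
  (forall i j, (fun k => u k i j) @ \oo --> l i j) -> u @ \oo --> l.
Proof.
move=> h; apply/cvg_mx_entourageP => A entA; rewrite near_map.
apply: (@filter_forall nat 'I_n (fun i k => forall j, (l i j, u k i j) \in A)) => i.
apply: (@filter_forall nat 'I_m (fun j k => (l i j, u k i j) \in A)) => j.
have H := cvg_entourage (h i j) entA.
near=> k; rewrite inE; near: k; exact: H.
Unshelve. all: by end_near. Qed.

Lemma scalar_mx_exp N (a : R) k : (a%:M : 'M[R]_N) ^+ k = (a ^+ k)%:M.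
Proof.
elim: k => [|k IH]; first by rewrite !expr0.
by rewrite !exprS IH scalar_mxM.
Qed.

Lemma scale_mx_exp N (a : R) (P : 'M[R]_N) k : (a *: P) ^+ k = a ^+ k *: P ^+ k.
Proof.
elim: k => [|k IH]; first by rewrite !expr0 scale1r.
by rewrite !exprS IH -!mulmxE -scalemxAr !scalemxAl scalerA [a ^+ k * a]mulrC.
Qed.

Lemma pow_entry N (P : 'M[R]_N) (t : R) k i j :
  (k`!%:R^-1 *: ((-t)%:M + t *: P) ^+ k) i j =
  \sum_(0 <= m < k.+1) exp_coeff (- t) (k - m)%N * (exp_coeff t m * (P ^+ m) i j).
Proof.
rewrite exprDn_comm; last by rewrite /GRing.comm -!mulmxE scalar_mxC.
rewrite mxE summxE big_mkord big_distrr /=; apply: eq_bigr => m _.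
rewrite mulmxnE scalar_mx_exp scale_mx_exp -mulmxE mul_scalar_mx scalerA !mxE /exp_coeff /=.
have mk : (m <= k)%N by rewrite -ltnS.
have := bin_fact mk => /(congr1 (fun x : nat => x%:R : R)); rewrite !natrM => hf.
have h1 : (k - m)`!%:R != 0 :> R by rewrite pnatr_eq0 -lt0n fact_gt0.
have h2 : m`!%:R != 0 :> R by rewrite pnatr_eq0 -lt0n fact_gt0.
rewrite -hf -mulr_natr; field.
by rewrite h1 h2 /= pnatr_eq0 -lt0n bin_gt0.
Qed.
End Mx.


Lemma cvg_sum_seq {R : realType} (I : Type) (s : seq I) (u : I -> nat -> R) (l : I -> R) :
  (forall i, u i @ \oo --> l i) ->
  (fun n => \sum_(i <- s) u i n) @ \oo --> \sum_(i <- s) l i.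
Proof.
move=> h; elim: s => [|a s IH].
  by rewrite big_nil; under eq_fun do rewrite big_nil; exact: cvg_cst.
rewrite big_cons; under eq_fun do rewrite big_cons.
exact: cvgD.
Qed.

Section Stoch.
Context {R : realType} {N : nat} (P : 'M[R]_N).
Hypothesis hP0 : forall i j, 0 <= P i j.
Hypothesis hP1 : forall i, \sum_j P i j = 1.

Lemma powS_entry m i j : (P ^+ m.+1) i j = \sum_l P i l * (P ^+ m) l j.
Proof. by rewrite exprS -mulmxE mxE. Qed.

Lemma pow0_entry i j : (P ^+ 0) i j = (i == j)%:R.
Proof. by rewrite expr0 mxE. Qed.

Lemma pow_ge0 m i j : 0 <= (P ^+ m) i j.
Proof.
elim: m i j => [|m IH] i j; first by rewrite pow0_entry ler0n.
by rewrite powS_entry; apply: sumr_ge0 => l _; rewrite mulr_ge0.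
Qed.

Lemma pow_row1 m i : \sum_j (P ^+ m) i j = 1.
Proof.
elim: m i => [|m IH] i.
  by under eq_bigr do rewrite pow0_entry; rewrite (bigD1 i) //= eqxx big1 ?addr0 // => j /negPf; rewrite eq_sym => ->.
under eq_bigr do rewrite powS_entry.
rewrite exchange_big /= -(hP1 i); apply: eq_bigr => l _.
by rewrite -big_distrr /= IH mulr1.
Qed.

Lemma pow_le1 m i j : (P ^+ m) i j <= 1.
Proof.
rewrite -(pow_row1 m i) (bigD1 j) //= lerDl; apply: sumr_ge0 => l _; exact: pow_ge0.
Qed.

Definition bcoef (t : R) i j m := exp_coeff t m * (P ^+ m) i j.

Lemma norm_exp_coeff (t : R) m : `|exp_coeff t m| = exp_coeff `|t| m.
Proof. by rewrite /exp_coeff /= normrM normfV normrX [`|_%:R|]ger0_norm. Qed.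

Lemma bcoef_bound t i j m : `|bcoef t i j m| <= exp_coeff `|t| m.
Proof.
rewrite /bcoef normrM norm_exp_coeff -[X in _ <= X]mulr1 ler_wpM2l //.
  by apply: exp_coeff_ge0.
by rewrite ger0_norm ?pow_ge0 ?pow_le1.
Qed.

Lemma bcoef_cvg t i j : cvgn (series (bcoef t i j)).
Proof.
apply: normed_cvg.
apply: (@series_le_cvg _ _ (exp_coeff `|t|)).
- by move=> n /=.
- by move=> n; apply: exp_coeff_ge0.
- by move=> n; apply: bcoef_bound.
- exact: is_cvg_series_exp_coeff.
Qed.

Definition Bs t i j := limn (series (bcoef t i j)).

Lemma expmx_formula t :
  expmx ((-t)%:M + t *: P) = \matrix_(i, j) (expR (- t) * Bs t i j).
Proof.
rewrite /expmx; apply: cvg_lim; first exact: norm_hausdorff.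
apply: mx_cvg_entry => i j; rewrite mxE.
have -> : (fun k => series (fun k0 : nat => k0`!%:R^-1 *: ((-t)%:M + t *: P) ^+ k0) k i j)
  = (fun n => \sum_(0 <= k < n) \sum_(0 <= m < k.+1) exp_coeff (- t) (k - m)%N * bcoef t i j m).
  apply: funext => n; rewrite /series /= summxE; apply: eq_bigr => k _.
  by rewrite pow_entry.
refine (@cauchy_prod_cvg R (exp_coeff (- t)) (bcoef t i j) `|t| (expR (-t)) (Bs t i j) (normr_ge0 t) _ _ _ _).
- by move=> m; rewrite norm_exp_coeff normrN.
- by move=> m; apply: bcoef_bound.
- exact: (is_cvg_series_exp_coeff (- t)).
- exact: bcoef_cvg.
Qed.
End Stoch.


Section Stoch2.
Context {R : realType} {N : nat} (P : 'M[R]_N).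
Hypothesis hP0 : forall i j, 0 <= P i j.
Hypothesis hP1 : forall i, \sum_j P i j = 1.

Let bge0 t i j m : 0 <= t -> 0 <= bcoef P t i j m.
Proof. by move=> t0; rewrite /bcoef mulr_ge0 ?exp_coeff_ge0 ?pow_ge0. Qed.

Lemma Bs_ge_series t i j n : 0 <= t -> series (bcoef P t i j) n <= Bs P t i j.
Proof.
move=> t0; apply: nondecreasing_cvgn_le; last exact: bcoef_cvg.
by apply: nondecreasing_series => k _ _; apply: bge0.
Qed.

Lemma Bs_ge_term t i j m : 0 <= t -> bcoef P t i j m <= Bs P t i j.
Proof.
move=> t0; apply: le_trans (Bs_ge_series i j m.+1 t0).
rewrite /series /= big_nat_recr //= lerDr; apply: sumr_ge0 => k _; exact: bge0.
Qed.

Lemma Bs_ge0 t i j : 0 <= t -> 0 <= Bs P t i j.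
Proof. by move=> t0; apply: le_trans (Bs_ge_term i j 0 t0); apply: bge0. Qed.

Lemma Bs_diag t i : 0 <= t -> 1 <= Bs P t i i.
Proof.
move=> t0; apply: le_trans (Bs_ge_term i i 0 t0).
by rewrite /bcoef pow0_entry eqxx /exp_coeff /= expr0 fact0 invr1 !mulr1.
Qed.

Lemma Bs_row t i : \sum_j Bs P t i j = expR t.
Proof.
rewrite /Bs; apply/esym/cvg_lim => //.
have := @cvg_sum_seq R _ (index_enum 'I_N) (fun j => series (bcoef P t i j))
   (fun j => limn (series (bcoef P t i j))) (fun j => @bcoef_cvg _ _ P hP0 hP1 t i j).
have -> : (fun n => \sum_(j <- index_enum 'I_N) series (bcoef P t i j) n) = series (exp_coeff t).
  apply: funext => n; rewrite /series /= exchange_big /=; apply: eq_bigr => k _.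
  by rewrite /bcoef -big_distrr /= (pow_row1 hP1) mulr1.
by [].
Qed.

Definition Ent t i j := expR (- t) * Bs P t i j.

Lemma Ent_row t i : \sum_j Ent t i j = 1.
Proof. by rewrite /Ent -big_distrr /= Bs_row expRN mulVf // gt_eqF // expR_gt0. Qed.

Lemma Ent_ge0 t i j : 0 <= t -> 0 <= Ent t i j.
Proof. by move=> t0; rewrite /Ent mulr_ge0 ?expR_ge0 ?Bs_ge0. Qed.

Lemma Ent_diag t i : 0 <= t -> expR (- t) <= Ent t i i.
Proof. by move=> t0; rewrite /Ent -[X in X <= _]mulr1 ler_wpM2l ?expR_ge0 ?Bs_diag. Qed.

Lemma Ent_off t i j : 0 <= t -> i != j -> Ent t i j <= 1 - Ent t i i.
Proof.
move=> t0 ij; rewrite -(Ent_row t i) (bigD1 i) //= (bigD1 j) 1?eq_sym //=.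
have : 0 <= \sum_(k | (k != i) && (k != j)) Ent t i k.
  by apply: sumr_ge0 => k _; apply: Ent_ge0.
lra.
Qed.

Lemma Ent_pos t i j m : 0 < t -> 0 < (P ^+ m) i j -> 0 < Ent t i j.
Proof.
move=> t0 pm; rewrite /Ent mulr_gt0 ?expR_gt0 //.
apply: lt_le_trans (Bs_ge_term i j m (ltW t0)).
by rewrite /bcoef mulr_gt0 // /exp_coeff /= divr_gt0 ?exprn_gt0 // ltr0n fact_gt0.
Qed.

Lemma path_pos i j : connect (fun a b => 0 < P a b) i j -> exists m, 0 < (P ^+ m) i j.
Proof.
move=> /connectP [p pth ->] {j}.
elim: p i pth => [|a p IH] i /=.
  by move=> _; exists 0%N; rewrite pow0_entry eqxx ltr01.
move=> /andP[pia pth]; have [m hm] := IH a pth; exists m.+1.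
rewrite powS_entry (bigD1 a) //=.
have : 0 <= \sum_(l | l != a) P i l * (P ^+ m) l (last a p).
  by apply: sumr_ge0 => l _; rewrite mulr_ge0 ?pow_ge0.
have : 0 < P i a * (P ^+ m) a (last a p) by rewrite mulr_gt0.
lra.
Qed.
End Stoch2.


Section Integ.
Context {R : realType} (nu : {measure set R -> \bar R}).

Lemma mposR : measurable (posR R).
Proof. exact: measurable_itv. Qed.

Lemma Rint_pos (f : R -> R) :
  nu.-integrable (posR R) (EFin \o f) ->
  (forall t, posR R t -> 0 < f t) -> nu (posR R) != 0%E ->
  0 < Rintegral nu (posR R) f.
Proof.
move=> fi fpos nu0.
have ge0 : 0 <= Rintegral nu (posR R) f.
  by apply: Rintegral_ge0 => t /fpos /ltW.
rewrite lt_def ge0 andbT; apply/negP => /eqP h0.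
have fin := integrable_fin_num mposR fi.
have i0 : (\int[nu]_(x in posR R) (EFin \o f) x = 0)%E.
  by move: h0; rewrite /Rintegral => h0; rewrite -(fineK fin) /= h0.
have /integrableP [mf _] := fi.
have : (\int[nu]_(x in posR R) `|(EFin \o f) x| = 0)%E.
  rewrite -i0; apply: eq_integral => t /set_mem /fpos /ltW ft.
  by rewrite /comp gee0_abs // lee_fin.
move/(ae_eq_integral_abs _ mposR mf) => [M [mM nuM sub]].
have : (nu (posR R) <= nu M)%E.
  apply: le_measure; rewrite ?inE //; first exact: mposR.
  move=> t pt; apply: sub => /= /(_ pt) /= [] /eqP; rewrite gt_eqF //; exact: fpos.
rewrite nuM => h; move: nu0; rewrite eq_le h /=; apply/negP/negPn.
exact: measure_ge0.
Qed.

Lemma Rint_sum (I : Type) (s : seq I) (f : I -> R -> R) :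
  (forall i, nu.-integrable (posR R) (EFin \o f i)) ->
  \sum_(i <- s) Rintegral nu (posR R) (f i) =
  Rintegral nu (posR R) (fun t => \sum_(i <- s) f i t).
Proof.
move=> fi; elim: s => [|a s IH].
  rewrite big_nil; under eq_Rintegral do rewrite big_nil.
  by rewrite Rintegral_cst ?mul0r //; exact: mposR.
rewrite big_cons IH -RintegralD.
- by under [RHS]eq_Rintegral do rewrite big_cons.
- exact: mposR.
- exact: fi.
have -> : EFin \o (fun t => \sum_(i <- s) f i t) = (fun t => \sum_(i <- s) (EFin \o f i) t)%E.
  by apply: funext => t /=; rewrite sumEFin.
apply: integrable_sum; first exact: mposR.
by move=> i _; exact: fi.
Qed.
End Integ.


Lemma integ_bound {R : realType} (nu : {measure set R -> \bar R}) (h : R -> R) :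
  (\int[nu]_(tau in (posR R)) (Num.min 1 tau)%:E < +oo)%E ->
  measurable_fun (posR R) h ->
  (forall t, posR R t -> `|h t| <= Num.min 1 t) ->
  nu.-integrable (posR R) (fun t => (h t)%:E).
Proof.
move=> hint mh hb.
apply: (@le_integrable _ _ _ nu _ mposR _ (fun t => (Num.min 1 t)%:E)).
- exact/measurable_EFinP.
- move=> t pt; rewrite !abse_EFin lee_fin; apply: le_trans (hb t pt) _.
  exact: ler_norm.
- apply/integrableP; split.
    apply/measurable_EFinP; apply: measurable_minr; [exact: measurable_cst|exact: measurable_id].
  apply: le_lt_trans hint; rewrite le_eqVlt; apply/orP; left; apply/eqP.
  apply: eq_integral => t /set_mem pt; rewrite abse_EFin ger0_norm //.
  by apply: le_trans (hb t pt); exact: normr_ge0.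
Qed.


Lemma Ent_meas {R : realType} {N : nat} (P : 'M[R]_N) :
  (forall i j, 0 <= P i j) -> (forall i, \sum_j P i j = 1) ->
  forall i j, measurable_fun (posR R) (fun t => Ent P t i j).
Proof.
move=> hP0 hP1 i j; rewrite /Ent.
apply: measurable_funM.
  apply: measurableT_comp; first exact: measurable_expR.
  apply: measurable_funN; exact: measurable_id.
apply: (@measurable_fun_cvg _ _ _ _ (fun n t => series (bcoef P t i j) n)).
  move=> n; rewrite /series /=; apply: measurable_sum => m.
  rewrite /bcoef /exp_coeff /=.
  apply: measurable_funM; last exact: measurable_cst.
  apply: measurable_funM; last exact: measurable_cst.
  apply: measurable_funX; exact: measurable_id.
move=> t _; exact: (@bcoef_cvg _ _ P hP0 hP1 t i j).
Qed.

Unset Implicit Arguments.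
Set Strict Implicit.
Theorem mainTheorem3 (R : realType) (N : nat) (Om : 'M[R]_N)
  (nu : {measure set R -> \bar R}) :
  (2 <= N)%N ->
  (forall i j, 0 <= Om i j) ->
  (forall i, Om i i = 0) ->
  (forall i, 0 < rowsum Om i) ->
  strongly_connected Om ->
  nu (posR R) != 0%E ->
  (\int[nu]_(tau in (posR R)) (Num.min 1 tau)%:E < +oo)%E ->
  let L := rw_laplacian Om in
  let G := g_mx nu L in
  let W := W_mx G in
  (forall i j, nu.-integrable (posR R) (fun tau => (g_integrand L tau i j)%:E)) /\
  (forall i, \sum_(j < N) G i j = 0) /\
  (forall i, 0 < G i i) /\
  (forall i j, i != j -> G i j < 0) /\
  (forall i, \sum_(j < N) W i j = 1) /\
  (forall i j, 0 <= W i j) /\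
  (forall i, W i i = 0) /\
  (forall i j, i != j -> 0 < W i j).
Proof.
move=> N2 Om0 _ rpos sc nu0 hint L G W.
pose P : 'M[R]_N := \matrix_(i, j) (Om i j / rowsum Om i).
have hP0 : forall i j, 0 <= P i j.
  by move=> i j; rewrite mxE divr_ge0 // ltW.
have hP1 : forall i, \sum_j P i j = 1.
  move=> i; have -> : \sum_j P i j = \sum_j (Om i j / rowsum Om i).
    by apply: eq_bigr => j _; rewrite mxE.
  by rewrite -mulr_suml -[\sum_j Om i j]/(rowsum Om i) divff // gt_eqF.
have hL : forall t : R, - t *: L = (- t)%:M + t *: P.
  move=> t; apply/matrixP => i j; rewrite !mxE.
  by case: (i == j) => /=; ring.
have hg : forall t i j, g_integrand L t i j = (i == j)%:R - Ent P t i j.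
  by move=> t i j; rewrite /g_integrand hL (expmx_formula hP0 hP1) !mxE.
have Erow := Ent_row hP0 hP1.
have Ediag_le1 : forall t i, 0 <= t -> Ent P t i i <= 1.
  move=> t i t0; rewrite -(Erow t i) (bigD1 i) //= lerDl.
  by apply: sumr_ge0 => k _; apply: (Ent_ge0 hP0 hP1).
have e1 : forall t : R, 0 < t -> 1 - expR (- t) <= Num.min 1 t.
  move=> t t0; rewrite le_min; apply/andP; split.
    by have := expR_ge0 (- t); lra.
  by have := expR_ge1Dx (- t); lra.
have bound : forall i j t, posR R t -> `|g_integrand L t i j| <= Num.min 1 t.
  move=> i j t; rewrite /posR /= in_itv /= andbT => t0.
  apply: le_trans (e1 t t0); rewrite hg.
  have ed := Ent_diag hP0 hP1 i (ltW t0).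
  have := Ediag_le1 t i (ltW t0).
  case: eqP => [<-|/eqP ij] /= h1.
    by rewrite ger0_norm; lra.
  rewrite sub0r normrN ger0_norm; last exact: (Ent_ge0 hP0 hP1 i j (ltW t0)).
  have := Ent_off hP0 hP1 (ltW t0) ij; lra.
have meas : forall i j, measurable_fun (posR R) (fun t => g_integrand L t i j).
  move=> i j; under eq_fun do rewrite hg.
  apply: measurable_funB; first exact: measurable_cst.
  exact: Ent_meas.
have integ : forall i j, nu.-integrable (posR R) (fun tau => (g_integrand L tau i j)%:E).
  move=> i j; apply: integ_bound; [exact: hint | exact: meas | exact: bound].
have GE : forall i j, G i j = Rintegral nu (posR R) (fun t => g_integrand L t i j).
  by move=> i j; rewrite /G /g_mx mxE.
have conn : forall i j, exists m, 0 < (P ^+ m) i j.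
  move=> i j; apply: (path_pos hP0).
  rewrite (@eq_connect _ _ (fun a b => 0 < Om a b)); first exact: sc.
  move=> a b; rewrite mxE /=; apply/idP/idP => h.
    by move: h; rewrite pmulr_lgt0 // invr_gt0.
  by rewrite divr_gt0.
have offpos : forall i j t, i != j -> 0 < t -> 0 < Ent P t i j.
  move=> i j t _ t0; have [m hm] := conn i j; exact: (Ent_pos hP0 hP1 t0 hm).
have Gsum : forall i, \sum_(j < N) G i j = 0.
  move=> i; under eq_bigr do rewrite GE.
  rewrite (@Rint_sum _ nu _ _ (fun j t => g_integrand L t i j)); last by move=> j; exact: integ.
  under eq_Rintegral do (under eq_bigr do rewrite hg).
  under eq_Rintegral do rewrite sumrB Erow.
  have -> : \sum_(j < N) ((i == j)%:R : R) = 1.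
    rewrite (bigD1 i) //= eqxx big1 ?addr0 // => j /negPf.
    by rewrite eq_sym => ->.
  under eq_Rintegral do rewrite subrr.
  by rewrite Rintegral_cst ?mul0r //; exact: mposR.
have Gdiag : forall i, 0 < G i i.
  move=> i; rewrite GE; apply: Rint_pos; [exact: (integ i i) | | exact: nu0].
  move=> t; rewrite /posR /= in_itv /= andbT => t0.
  have [j ij] : exists j : 'I_N, i != j.
    have h0 : (0 < N)%N by apply: leq_trans N2.
    have h1 : (1 < N)%N by [].
    case: (eqVneq i (Ordinal h0)) => [->|ne]; last by exists (Ordinal h0).
    by exists (Ordinal h1).
  rewrite hg eqxx mulr1n.
  have := Ent_off hP0 hP1 (ltW t0) ij; have := offpos i j t ij t0; lra.
have Goff : forall i j, i != j -> G i j < 0.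
  move=> i j ij; rewrite GE.
  have hn : 0 < Rintegral nu (posR R) (fun t => - g_integrand L t i j).
    apply: Rint_pos; last exact: nu0.
      apply: integ_bound; first exact: hint.
        by apply: measurable_funN; exact: meas.
      by move=> t pt; rewrite normrN; exact: bound.
    move=> t; rewrite /posR /= in_itv /= andbT => t0.
    by rewrite hg (negPf ij) sub0r opprK; exact: offpos.
  have : Rintegral nu (posR R) (fun t => - g_integrand L t i j) =
         - Rintegral nu (posR R) (fun t => g_integrand L t i j).
    rewrite -mulN1r -RintegralZl; [ |exact: mposR|exact: (integ i j)].
    by apply: eq_Rintegral => t _; rewrite mulN1r.
  by move=> e; rewrite e oppr_gt0 in hn.
have WE : forall i j, W i j = (i == j)%:R - G i j / G i i.
  by move=> i j; rewrite /W /W_mx mxE.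
have Wdiag : forall i, W i i = 0.
  by move=> i; rewrite WE eqxx divff ?subrr // gt_eqF.
have Woff : forall i j, i != j -> 0 < W i j.
  move=> i j ij; rewrite WE (negPf ij) sub0r oppr_gt0.
  by rewrite pmulr_llt0 ?invr_gt0 // Goff.
split; first exact: integ.
split; first exact: Gsum.
split; first exact: Gdiag.
split; first exact: Goff.
split.
  move=> i; under eq_bigr do rewrite WE.
  rewrite sumrB -mulr_suml Gsum mul0r subr0.
  rewrite (bigD1 i) //= eqxx big1 ?addr0 // => j /negPf.
  by rewrite eq_sym => ->.
split.
  move=> i j; case: (eqVneq i j) => [->|ij]; first by rewrite Wdiag.
  exact/ltW/Woff.
by split.
Qed.
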